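(* Let $R\subseteq T$ be an integral extension of rings. Suppose that for every maximal ideal $Q$ of $T$ there is a maximal subring $V$ of $T$, integrally closed in $T$, with $(V:T)=Q$. Then for every maximal ideal $P$ of $R$ there is a maximal subring $W$ of $R$, integrally closed in $R$, with $(W:R)=P$.
   Context: All rings are commutative with $1\neq0$ and subrings are unital. A maximal subring of a ring $A$ is a proper subring maximal with respect to inclusion among proper subrings. The conductor of $S\subseteq A$ is $(S:A)=\{x\in A\mid Ax\subseteq S\}$. *)

(* Defs.v *)
From mathcomp Require Import all_boot all_algebra.
Set Implicit Arguments. Unset Strict Implicit. Unset Printing Implicit Defensive.
Import GRing.Theory.
Local Open Scope ring_scope.

(* Subsets of a commutative ring T are Prop-valued predicates T -> Prop.
   A subring R of a ring T is represented by its carrier inside T. *)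

Definition subset_of (T : Type) (A B : T -> Prop) := forall x, A x -> B x.
Definition same_set (T : Type) (A B : T -> Prop) := forall x, A x <-> B x.
Definition full_set (T : Type) : T -> Prop := fun _ => True.

Definition is_subring (T : comNzRingType) (S : T -> Prop) :=
  [/\ S 1, (forall x y, S x -> S y -> S (x - y)) & (forall x y, S x -> S y -> S (x * y))].

Definition is_ideal_of (T : comNzRingType) (A I : T -> Prop) :=
  [/\ subset_of I A, I 0, (forall x y, I x -> I y -> I (x + y))
    & (forall a x, A a -> I x -> I (a * x))].

Definition is_maximal_ideal_of (T : comNzRingType) (A I : T -> Prop) :=
  [/\ is_ideal_of A I, (exists a, A a /\ ~ I a)
    & forall J, is_ideal_of A J -> subset_of I J -> subset_of J I \/ subset_of A J].

Definition is_maximal_subring_of (T : comNzRingType) (A S : T -> Prop) :=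
  [/\ is_subring S, subset_of S A, ~ subset_of A S
    & forall S', is_subring S' -> subset_of S S' -> subset_of S' A ->
                 subset_of A S' \/ subset_of S' S].

Definition integral_over (T : comNzRingType) (S : T -> Prop) (x : T) :=
  exists p : {poly T}, [/\ p \is monic, (forall i, S p`_i) & root p x].

Definition int_closed_in (T : comNzRingType) (S A : T -> Prop) :=
  forall x, A x -> integral_over S x -> S x.

(* conductor (S : A) = { x in A | A x ⊆ S } *)
Definition conductor (T : comNzRingType) (S A : T -> Prop) : T -> Prop :=
  fun x => A x /\ forall a, A a -> S (a * x).

(* Main.v *)
Require Import Defs.
From mathcomp Require Import all_boot all_algebra.
From mathcomp Require Import boolp classical_sets.
From mathcomp Require Import ring.
Import GRing.Theory.
Set Implicit Arguments. Unset Strict Implicit. Unset Printing Implicit Defensive.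
Local Open Scope classical_set_scope.
Local Open Scope ring_scope.

Lemma sr0 (T : comNzRingType) (S : T -> Prop) : is_subring S -> S 0.
Proof. by case=> h1 hB _; rewrite -(subrr 1); apply: hB. Qed.
Lemma srN (T : comNzRingType) (S : T -> Prop) x : is_subring S -> S x -> S (- x).
Proof. move=> hS hx; rewrite -sub0r; have h0 := sr0 hS; case: hS => _ hB _; exact: hB. Qed.
Lemma srD (T : comNzRingType) (S : T -> Prop) x y : is_subring S -> S x -> S y -> S (x + y).
Proof. move=> hS hx hy; rewrite -(opprK y); case: (hS) => _ hB _; apply: hB => //; exact: srN. Qed.
Lemma srB (T : comNzRingType) (S : T -> Prop) x y : is_subring S -> S x -> S y -> S (x - y).
Proof. by case=> _ hB _; apply: hB. Qed.
Lemma srM (T : comNzRingType) (S : T -> Prop) x y : is_subring S -> S x -> S y -> S (x * y).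
Proof. by case=> _ _ hM; apply: hM. Qed.
Lemma sr1 (T : comNzRingType) (S : T -> Prop) : is_subring S -> S 1.
Proof. by case. Qed.
Lemma srX (T : comNzRingType) (S : T -> Prop) x n : is_subring S -> S x -> S (x ^+ n).
Proof. move=> hS hx; elim: n => [|n IH]; first by rewrite expr0; exact: sr1.
by rewrite exprS; apply: srM. Qed.
Lemma srsum (T : comNzRingType) (S : T -> Prop) n (F : 'I_n -> T) :
  is_subring S -> (forall i, S (F i)) -> S (\sum_(i < n) F i).
Proof. move=> hS hF; apply: (big_ind S) => //; [exact: sr0| move=> *; exact: srD]. Qed.
Lemma srnat (T : comNzRingType) (S : T -> Prop) (b : bool) : is_subring S -> S b%:R.
Proof. by case: b => hS; [exact: sr1 | exact: sr0]. Qed.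

Lemma idN (T : comNzRingType) (A I : T -> Prop) x :
  is_subring A -> is_ideal_of A I -> I x -> I (- x).
Proof. move=> hA [_ _ _ hM] hx; rewrite -mulN1r; apply: hM => //; apply: srN => //; exact: sr1. Qed.
Lemma idB (T : comNzRingType) (A I : T -> Prop) x y :
  is_subring A -> is_ideal_of A I -> I x -> I y -> I (x - y).
Proof. move=> hA hI hx hy; case: (hI) => _ _ hD _; apply: hD => //; exact: idN hA hI hy. Qed.
Lemma idsum (T : comNzRingType) (A I : T -> Prop) n (F : 'I_n -> T) :
  is_ideal_of A I -> (forall i, I (F i)) -> I (\sum_(i < n) F i).
Proof. move=> [_ h0 hD _] hF; exact: (big_ind I). Qed.
Lemma idX1 (T : comNzRingType) (A I : T -> Prop) z n :
  is_subring A -> is_ideal_of A I -> A z -> I (z - 1) -> I (z ^+ n - 1).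
Proof.
move=> hA hI hz h1; elim: n => [|n IH]; first by rewrite expr0 subrr; case: hI.
have -> : z ^+ n.+1 - 1 = z * (z ^+ n - 1) + (z - 1) by rewrite exprS; ring.
case: (hI) => _ _ hD hM; apply: hD => //; exact: hM.
Qed.

Lemma full_sr (T : comNzRingType) : is_subring (@full_set T).
Proof. by []. Qed.

Lemma integral_mono (T : comNzRingType) (S1 S2 : T -> Prop) x :
  subset_of S1 S2 -> integral_over S1 x -> integral_over S2 x.
Proof. by move=> h [p [hm hc hr]]; exists p; split => // i; apply: h. Qed.

Lemma inv_mod (T : comNzRingType) (R P : T -> Prop) :
  is_subring R -> is_maximal_ideal_of R P ->
  forall a, R a -> ~ P a -> exists u, R u /\ P (u * a - 1).
Proof.
move=> hR [hI _ hmax] a ha hna.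
pose J := fun x => exists q r, [/\ P q, R r & x = q + r * a].
have hJ : is_ideal_of R J.
  case: (hI) => hPR hP0 hPD hPM.
  split.
  - move=> x [q [r [hq hr ->]]]; apply: srD => //; [exact: hPR | exact: srM].
  - exists 0, 0; split => //; [exact: sr0 | by rewrite mul0r addr0].
  - move=> x y [q [r [hq hr ->]]] [q' [r' [hq' hr' ->]]]; exists (q + q'), (r + r').
    split; [exact: hPD | exact: srD | ring].
  - move=> b x hb [q [r [hq hr ->]]]; exists (b * q), (b * r).
    split; [exact: hPM | exact: srM | ring].
case: (hmax J hJ).
- move=> x hx; exists x, 0; split => //; [exact: sr0 | by rewrite mul0r addr0].
- move=> hJP; exfalso; apply: hna; apply: hJP; exists 0, 1.
  split; [by case: hI | exact: sr1 | by rewrite add0r mul1r].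
- move=> hRJ; have [q [r [hq hr h1]]] := hRJ 1 (sr1 hR); exists r; split => //.
  have -> : r * a - 1 = - q by rewrite h1; ring.
  exact: idN hR hI hq.
Qed.

Lemma prime_of_max (T : comNzRingType) (R P : T -> Prop) :
  is_subring R -> is_maximal_ideal_of R P ->
  forall a b, R a -> R b -> P (a * b) -> ~ P a -> P b.
Proof.
move=> hR hP a b ha hb hab hna.
have [u [hu hua]] := inv_mod hR hP ha hna.
have -> : b = u * (a * b) - b * (u * a - 1) by ring.
case: hP => hI _ _; apply: (idB hR hI); case: (hI) => _ _ _ hM; exact: hM.
Qed.

Lemma max_not1 (T : comNzRingType) (R P : T -> Prop) :
  is_maximal_ideal_of R P -> ~ P 1.
Proof.
move=> [[_ _ _ hM] [a [ha hna]] _] h1; apply: hna; rewrite -(mulr1 a); exact: hM.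
Qed.

Lemma max_pow (T : comNzRingType) (R P : T -> Prop) :
  is_subring R -> is_maximal_ideal_of R P ->
  forall s n, R s -> ~ P s -> ~ P (s ^+ n).
Proof.
move=> hR hP s n hs hns; elim: n => [|n IH]; first by rewrite expr0; exact: max_not1 hP.
rewrite exprS => h; apply: IH; apply: (prime_of_max hR hP hs _ h hns); exact: srX.
Qed.

Lemma no_PT (T : comNzRingType) (R P : T -> Prop) :
  is_subring R -> is_maximal_ideal_of R P -> (forall t : T, integral_over R t) ->
  forall k (p y : nat -> T) s, (forall j, P (p j)) -> R s -> ~ P s ->
  s <> \sum_(j < k) p j * y j.
Proof.
move=> hR hP hint k; elim: k => [|k IH] p y s hp hs hns.
  rewrite big_ord0 => h0; apply: hns; rewrite h0; by case: hP => [[]].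
rewrite big_ord_recr /= => hseq.
move: hseq; set z := \sum_(j < k) p j * y j; set a := p k; set t := y k => hseq.
have [f [hmon hcoef hroot]] := hint t.
set n := (size f).-1.
have hsz : size f = n.+1 by rewrite /n prednK // lt0n size_poly_eq0 monic_neq0.
have hfn : f`_n = 1 by move/monicP: hmon.
have hPI : is_ideal_of R P by case: hP.
have hPR : subset_of P R by case: hPI.
have hPa : P a := hp k.
have hRa : R a := hPR _ hPa.
pose c := \sum_(i < n) f`_i * a ^+ (n - i.+1) * s ^+ i.
pose s' := s ^+ n + a * c.
have hc : R c.
  apply: srsum => // i; apply: srM => //; [apply: srM => //; exact: srX| exact: srX].
have hRs' : R s' by apply: srD => //; [exact: srX | exact: srM].
have hns' : ~ P s'.
  move=> h; apply: (max_pow hR hP (n:=n) hs hns).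
  have -> : s ^+ n = s' - a * c by rewrite /s' addrK.
  apply: (idB hR hPI) => //; rewrite mulrC; case: hPI => _ _ _ hM; exact: hM.
have [w hw] : exists w, s' = z * w.
  exists (\sum_(i < n.+1) f`_i * a ^+ (n - i) * \sum_(j < i) s ^+ (i.-1 - j) * (a * t) ^+ j).
  rewrite mulr_sumr.
  have E1 : s' = \sum_(i < n.+1) f`_i * a ^+ (n - i) * s ^+ i.
    rewrite big_ord_recr /= subnn expr0 hfn mul1r mul1r /s' addrC; congr (_ + _).
    rewrite /c mulr_sumr; apply: eq_bigr => i _.
    rewrite -(subnSK (ltn_ord i)) exprS.
    move: (f`_i) (a ^+ _) (s ^+ _) => X Y Z; ring.
  have E2 : \sum_(i < n.+1) f`_i * a ^+ (n - i) * (a * t) ^+ i = 0.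
    have : a ^+ n * f.[t] = 0 by rewrite (rootP hroot) mulr0.
    rewrite horner_coef hsz mulr_sumr => h; apply: (etrans _ h); apply: eq_bigr => i _.
    have -> : a ^+ n = a ^+ (n - i) * a ^+ i by rewrite -exprD subnK // (leq_ord i).
    rewrite exprMn.
    move: (f`_i) (a ^+ _) (a ^+ _) (t ^+ _) => X Y Z U; ring.
  have hz : s - a * t = z by rewrite hseq addrK.
  rewrite E1; apply: (etrans (y := (\sum_(i < n.+1) f`_i * a ^+ (n - i) * s ^+ i) - \sum_(i < n.+1) f`_i * a ^+ (n - i) * (a * t) ^+ i)); first by rewrite E2 subr0.
  rewrite -sumrB; apply: eq_bigr => i _.
  rewrite -mulrBr subrXX hz.
  move: (f`_i) (a ^+ _) (\sum_(j < i) _) => X Y Z; ring.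
apply: (IH p (fun j => y j * w) s' hp hRs' hns').
rewrite hw /z mulr_suml; apply: eq_bigr => j _; by rewrite mulrA.
Qed.

Lemma exists_max_ideal (T : comNzRingType) (R P : T -> Prop) :
  is_subring R -> is_maximal_ideal_of R P -> (forall t : T, integral_over R t) ->
  exists Q, is_maximal_ideal_of (@full_set T) Q /\ subset_of P Q.
Proof.
move=> hR hP hint.
have hP0 : P 0 by case: hP => [[]].
pose PT := fun x => exists k (p y : nat -> T), (forall j, P (p j)) /\ x = \sum_(j < k) p j * y j.
have hPT : is_ideal_of (@full_set T) PT.
  split.
  - by [].
  - exists 0%N, (fun _ => 0), (fun _ => 0); split => //; by rewrite big_ord0.
  - move=> x y [k1 [p1 [y1 [hp1 ->]]]] [k2 [p2 [y2 [hp2 ->]]]].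
    exists (k1 + k2)%N, (fun j => if (j < k1)%N then p1 j else p2 (j - k1)%N),
      (fun j => if (j < k1)%N then y1 j else y2 (j - k1)%N); split.
    + move=> j; by case: ifP.
    + rewrite big_split_ord /=; congr (_ + _); apply: eq_bigr => i _ /=.
      * by rewrite ltn_ord.
      * by rewrite ltnNge leq_addr /= addKn.
  - move=> b x _ [k [p [y [hp ->]]]]; exists k, p, (fun j => b * y j); split => //.
    rewrite mulr_sumr; apply: eq_bigr => j _; by rewrite mulrCA.
have hPPT : subset_of P PT.
  move=> x hx; exists 1%N, (fun _ => x), (fun _ => 1); split => //; by rewrite big_ord1 mulr1.
have hn1 : ~ PT 1.
  move=> [k [p [y [hp h]]]]; exact: (no_PT hR hP hint hp (sr1 hR) (max_not1 hP) h).
pose Pz := fun A : set T => A = set0 \/ [/\ is_ideal_of (@full_set T) A, subset_of PT A & ~ A 1].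
have [A [hA hmaxA]] : exists A, Pz A /\ forall B, A `<` B -> ~ Pz B.
  apply: Zorn_bigcup => F hF htot.
  have hne : forall (X : set T) x, X x -> X <> set0.
    by move=> X x hx h0; rewrite h0 in hx.
  case: (pselect (exists X, F X /\ X <> set0)) => [[X0 [hX0 hX0n]]|hno].
  + right.
    have hid : forall X, F X -> X <> set0 ->
        [/\ is_ideal_of (@full_set T) X, subset_of PT X & ~ X 1].
      by move=> X hX hXn; case: (hF X hX).
    have [hI0 hsub0 _] := hid X0 hX0 hX0n.
    split.
    * split => //.
      - by exists X0 => //; case: hI0.
      - move=> x y [X1 h1 hx] [X2 h2 hy].
        case: (htot X1 X2 h1 h2) => hs.
        + exists X2 => //; have [[_ _ hD _] _ _] := hid X2 h2 (hne _ _ hy).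
          apply: hD => //; exact: hs.
        + exists X1 => //; have [[_ _ hD _] _ _] := hid X1 h1 (hne _ _ hx).
          apply: hD => //; exact: hs.
      - move=> b x _ [X h hx]; exists X => //.
        have [[_ _ _ hM] _ _] := hid X h (hne _ _ hx); exact: hM.
    * move=> x hx; exists X0 => //; exact: hsub0.
    * move=> [X h hx]; have [_ _ hn] := hid X h (hne _ _ hx); exact: hn hx.
  + left; apply/seteqP; split => x // [X hX hx].
    apply: hno; exists X; split => //; exact: hne hx.
have hAn : A <> set0.
  move=> h0; apply: (hmaxA PT); last by right; split.
  rewrite h0; split => // h; exact: (h 0 (hPPT 0 hP0)).
case: hA => [//|[hAI hPTA hA1]].
exists A; split; last by move=> x hx; apply: hPTA; apply: hPPT.
split => //; first by exists 1.
move=> J hJ hAJ; case: (pselect (J 1)) => hJ1.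
  right; move=> x _; rewrite -(mulr1 x); case: hJ => _ _ _ hM; exact: hM.
left; case: (pselect (subset_of J A)) => // hnJA; exfalso.
apply: (hmaxA J).
  split => //; move=> h; apply: hnJA => x hx; exact: h x hx.
right; split => //; move=> x hx; exact: hAJ _ (hPTA _ hx).
Qed.

Lemma adjoin (T : comNzRingType) (V : T -> Prop) :
  is_maximal_subring_of (@full_set T) V -> forall s, ~ V s ->
  forall t, exists p : {poly T}, (forall i, V p`_i) /\ t = p.[s].
Proof.
move=> [hV _ _ hmax] s hns t.
pose S := fun y => exists p : {poly T}, (forall i, V p`_i) /\ y = p.[s].
have hS : is_subring S.
  split.
  - exists 1; split; [move=> i; rewrite coef1; exact: srnat | by rewrite hornerC].
  - move=> x y [p [hp ->]] [q [hq ->]]; exists (p - q); split.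
    + move=> i; rewrite coefB; exact: srB.
    + by rewrite hornerD hornerN.
  - move=> x y [p [hp ->]] [q [hq ->]]; exists (p * q); split.
    + move=> i; rewrite coefM; apply: srsum => // j; exact: srM.
    + by rewrite hornerM.
case: (hmax S hS).
- move=> v hv; exists v%:P; split; last by rewrite hornerC.
  move=> i; rewrite coefC; case: eqP => _ //; exact: sr0.
- by [].
- move=> h; exact: h t I.
- move=> h; exfalso; apply: hns; apply: h; exists 'X; split; last by rewrite hornerX.
  move=> i; rewrite coefX; exact: srnat.
Qed.

Lemma rev_mod (T : comNzRingType) (Q : T -> Prop) :
  is_ideal_of (@full_set T) Q -> forall x u m (c : nat -> T), Q (x * u - 1) ->
  Q ((\sum_(i < m) c i * x ^+ i) * u ^+ m - \sum_(i < m) c i * u ^+ (m - i)).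
Proof.
move=> hQ x u m c hxu.
rewrite mulr_suml -sumrB; apply: (idsum hQ) => i.
have -> : c i * x ^+ i * u ^+ m - c i * u ^+ (m - i) =
          (c i * u ^+ (m - i)) * ((x * u) ^+ i - 1).
  have -> : u ^+ m = u ^+ i * u ^+ (m - i) by rewrite -exprD subnKC // ltnW.
  rewrite exprMn; move: (c i) (x ^+ i) (u ^+ i) (u ^+ (m - i)) => X Y Z W; ring.
case: (hQ) => _ _ _ hM; apply: hM; first by [].
have hh := (@idX1 T (@full_set T) Q (x * u) i (full_sr T) hQ I hxu).
exact: hh.
Qed.

Lemma int_rev (T : comNzRingType) (V : T -> Prop) :
  is_subring V -> forall u m (c : nat -> T) q, V q -> (forall i, V (c i)) ->
  u ^+ m.+1 = q + \sum_(i < m) c i * u ^+ (m - i) -> integral_over V u.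
Proof.
move=> hV u m c q hq hc heq.
pose E := fun j => if j == 0%N then q else c (m - j)%N.
exists ('X^(m.+1) - \poly_(j < m.+1) E j); split.
- apply/monicP; rewrite lead_coefDl ?lead_coefXn // size_polyN size_polyXn ltnS.
  exact: size_poly.
- move=> i; rewrite coefB coefXn coef_poly; apply: srB => //; first exact: srnat.
  case: ifP => _; last exact: sr0.
  by rewrite /E; case: ifP.
- apply/rootP; rewrite hornerD hornerN hornerXn horner_poly heq.
  apply/eqP; rewrite subr_eq0; apply/eqP.
  rewrite [RHS]big_ord_recl [in LHS](reindex_inj rev_ord_inj) /=.
  congr (_ + _); first by rewrite /E eqxx expr0 mulr1.
  apply: eq_bigr => i _; rewrite /bump leq0n add1n /E /= subKn //.
Qed.

Theorem theorem3p8 (T : comNzRingType) (R : T -> Prop) :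
  is_subring R ->
  (forall t : T, integral_over R t) ->
  (forall Q : T -> Prop, is_maximal_ideal_of (@full_set T) Q ->
     exists V : T -> Prop,
       [/\ is_maximal_subring_of (@full_set T) V,
           int_closed_in V (@full_set T)
         & same_set (conductor V (@full_set T)) Q]) ->
  forall P : T -> Prop, is_maximal_ideal_of R P ->
    exists W : T -> Prop,
      [/\ is_maximal_subring_of R W, int_closed_in W R
        & same_set (conductor W R) P].
Proof.
move=> hR hint hyp P hP.
have [Q [hQ hPQ]] := exists_max_ideal hR hP hint.
have [V [hVmax hVint hVc]] := hyp Q hQ.
case: (hVmax) => hV _ hVnf _.
have hQI : is_ideal_of (@full_set T) Q by case: hQ.
have hQV : subset_of Q V.
  move=> x hx; have [_ h] := (hVc x).2 hx; rewrite -(mul1r x); exact: h.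
have hPI : is_ideal_of R P by case: hP.
have hPR : subset_of P R by case: hPI.
have hPV : subset_of P V := fun x hx => hQV _ (hPQ _ hx).
have hPM : forall a x, R a -> P x -> P (a * x) by case: hPI.
pose W := fun x => V x /\ R x.
have hW : is_subring W.
  split; first by split; exact: sr1.
  - move=> x y [? ?] [? ?]; split; exact: srB.
  - move=> x y [? ?] [? ?]; split; exact: srM.
have hRW : ~ subset_of R W.
  move=> h; apply: hVnf => t _; apply: hVint => //.
  apply: integral_mono (hint t); move=> x hx; exact: (h x hx).1.
have hPW : subset_of P (conductor W R).
  move=> y hy; split; first exact: hPR.
  move=> a ha; have h := hPM _ _ ha hy; split; [exact: hPV | exact: hPR].
exists W; split.
- split => //.
  + by move=> x [].
  + move=> S' hS' hWS hS'R.
    case: (pselect (subset_of S' W)) => hsub; [by right | left].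
    have [s [hs hns]] : exists s, S' s /\ ~ V s.
      case: (pselect (exists s, S' s /\ ~ V s)) => // hno; exfalso; apply: hsub.
      move=> x hx; split; last exact: hS'R.
      case: (pselect (V x)) => // hnv; exfalso; apply: hno; by exists x.
    have hRs := hS'R _ hs.
    have hnPs : ~ P s := fun h => hns (hPV _ h).
    have [u [hRu hus]] := inv_mod hR hP hRs hnPs.
    have hQsu : Q (s * u - 1) by apply: hPQ; rewrite mulrC.
    have hVu : V u.
      apply: hVint => //.
      have [p [hp hup]] := adjoin hVmax hns u.
      have h := @rev_mod T Q hQI s u (size p) (fun i => p`_i) hQsu.
      rewrite -horner_coef -hup in h.
      apply: (int_rev hV (m := size p) (c := fun i => p`_i)
        (q := u * u ^+ size p - \sum_(i < size p) p`_i * u ^+ (size p - i))).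
      * exact: hQV.
      * exact: hp.
      * by rewrite exprS subrK.
    move=> r hr.
    have [p [hp hrp]] := adjoin hVmax hns r.
    have h := @rev_mod T Q hQI s u (size p) (fun i => p`_i) hQsu.
    rewrite -horner_coef -hrp in h.
    move: h; set m := size p => h.
    have hVru : V (r * u ^+ m).
      rewrite -(subrK (\sum_(i < m) p`_i * u ^+ (m - i)) (r * u ^+ m)).
      apply: srD => //; first exact: hQV.
      apply: srsum => // i; apply: srM => //; exact: srX.
    have hS'ru : S' (r * u ^+ m) by apply: hWS; split => //; apply: srM => //; exact: srX.
    have hPum : P ((u * s) ^+ m - 1) := idX1 m hR hPI (srM hR hRu hRs) hus.
    have -> : r = (r * u ^+ m) * s ^+ m - r * ((u * s) ^+ m - 1).
      rewrite exprMn; move: (u ^+ m) (s ^+ m) => X Y; ring.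
    apply: srB => //; first by apply: srM => //; apply: srX.
    apply: hWS; have h2 := hPM _ _ hr hPum; split; [exact: hPV | exact: hPR].
- move=> x hx hxi; split => //; apply: hVint => //; apply: integral_mono hxi; by move=> y [].
- have hC : is_ideal_of R (conductor W R).
    split.
    + by move=> y [].
    + split; first exact: sr0.
      move=> a ha; rewrite mulr0; split; [exact: sr0 | exact: sr0].
    + move=> y z [hy hcy] [hz hcz]; split; first exact: srD.
      move=> a ha; rewrite mulrDr; have [? ?] := hcy a ha; have [? ?] := hcz a ha.
      split; exact: srD.
    + move=> b y hb [hy hcy]; split; first exact: srM.
      move=> a ha; rewrite mulrA; apply: hcy; exact: srM.
  move=> x; split; last exact: hPW.
  move=> hx; case: hP => _ _ hmax; case: (hmax _ hC hPW).
  + move=> h; exact: h x hx.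
  + move=> h; exfalso; apply: hRW => a ha; have [_ h1] := h 1 (sr1 hR).
    by have := h1 a ha; rewrite mulr1.
Qed.
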